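(* Let $f(x,y)=x^2y$. Let $t>0$ and let $I=[a,a+3t]$ and $J=[b,b+3t]$ be intervals contained in $[\tfrac23,1]$. Then \[ f(I,J) = f(\ddot I,\ddot J), \] where $\ddot I = [a,a+t]\cup[a+2t,a+3t]$ and $\ddot J=[b,b+t]\cup[b+2t,b+3t]$.
   Context: For sets $A,B\subset\mathbb{R}$, $f(A,B)=\{f(x,y):x\in A, y\in B\}$. *)

(* Defs.v *)
From Stdlib Require Import Reals.
Open Scope R_scope.

Definition image2 (f : R -> R -> R) (A B : R -> Prop) : R -> Prop :=
  fun z => exists x y, A x /\ B y /\ z = f x y.

Definition Icc (u v : R) : R -> Prop := fun x => u <= x <= v.

Definition ddot (a t : R) : R -> Prop :=
  fun x => Icc a (a + t) x \/ Icc (a + 2 * t) (a + 3 * t) x.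

Definition fx2y (x y : R) : R := x ^ 2 * y.

(* Main.v *)
Require Import Defs.
From Stdlib Require Import Reals Lra Psatz.
Open Scope R_scope.

Lemma rect (x0 x1 y0 y1 z : R) :
  0 < x0 -> x0 <= x1 -> 0 < y0 -> y0 <= y1 ->
  x0 ^ 2 * y0 <= z -> z <= x1 ^ 2 * y1 ->
  exists x y, x0 <= x <= x1 /\ y0 <= y <= y1 /\ z = x ^ 2 * y.
Proof.
  intros H0 H1 H2 H3 H4 H5.
  destruct (Rle_dec z (x1 ^ 2 * y0)) as [Hc|Hc].
  - assert (Hq : 0 <= z / y0).
    { apply Rmult_le_pos; [nra | left; apply Rinv_0_lt_compat; lra]. }
    assert (Hzy : z / y0 * y0 = z) by (field; lra).
    assert (Hs : sqrt (z / y0) * sqrt (z / y0) = z / y0) by (apply sqrt_sqrt; lra).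
    exists (sqrt (z / y0)), y0. split; [split|split; [lra|]].
    + rewrite <- (sqrt_square x0) by lra. apply sqrt_le_1_alt.
      apply (Rmult_le_reg_r y0); [lra|]. rewrite Hzy. nra.
    + rewrite <- (sqrt_square x1) by lra. apply sqrt_le_1_alt.
      apply (Rmult_le_reg_r y0); [lra|]. rewrite Hzy. nra.
    + simpl. rewrite Rmult_1_r, Hs. field. lra.
  - exists x1, (z / x1 ^ 2).
    assert (0 < x1 ^ 2) by nra.
    assert (Hzx : z / x1 ^ 2 * x1 ^ 2 = z) by (field; lra).
    split; [lra|split; [split|]].
    + apply (Rmult_le_reg_r (x1 ^ 2)); [lra|]. unfold Rdiv.
      rewrite ?Hzx; nra.
    + apply (Rmult_le_reg_r (x1 ^ 2)); [lra|]. unfold Rdiv.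
      rewrite ?Hzx; nra.
    + field. lra.
Qed.

Theorem lemma3p4 (a b t : R) :
  0 < t ->
  2 / 3 <= a -> a + 3 * t <= 1 ->
  2 / 3 <= b -> b + 3 * t <= 1 ->
  forall z : R,
    image2 fx2y (Icc a (a + 3 * t)) (Icc b (b + 3 * t)) z <->
    image2 fx2y (ddot a t) (ddot b t) z.
Proof.
  intros Ht Ha Ha' Hb Hb' z. unfold image2, ddot, Icc, fx2y. split.
  - intros (x & y & Hx & Hy & Hz).
    assert (L : a ^ 2 * b <= z).
    { subst z. assert (a^2 <= x^2) by nra. nra. }
    assert (U : z <= (a + 3*t) ^ 2 * (b + 3*t)).
    { subst z. assert (x^2 <= (a+3*t)^2) by nra. nra. }
    assert (I1 : a ^ 2 * (b + 2*t) <= (a+t)^2*(b+t)).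
    { assert (0 <= t * (2*a*b - a^2) + t*(2*a*t + t*b + t*t)) by
        (apply Rplus_le_le_0_compat; apply Rmult_le_pos; nra). nra. }
    assert (I2 : (a+2*t)^2 * b <= (a+t)^2*(b+3*t)).
    { assert (0 <= t * (3*(a+t)^2 - b*(2*a+3*t))).
      { apply Rmult_le_pos; [lra|]. nra. } nra. }
    assert (I3 : (a+2*t)^2*(b+2*t) <= (a+3*t)^2*(b+t)).
    { assert (0 <= t * (a*(2*b-a) + t*(5*b-2*a) + t*t)).
      { apply Rmult_le_pos; [lra|]. nra. } nra. }
    destruct (Rle_dec z ((a+t)^2*(b+t))).
    + destruct (rect a (a+t) b (b+t) z) as (x' & y' & ? & ? & ?); try lra.
      exists x', y'; split; [left|split; [left|]]; lra.
    + destruct (Rle_dec z ((a+t)^2*(b+3*t))).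
      * destruct (rect a (a+t) (b+2*t) (b+3*t) z) as (x' & y' & ? & ? & ?); try lra.
        exists x', y'; split; [left|split; [right|]]; lra.
      * destruct (Rle_dec z ((a+3*t)^2*(b+t))).
        -- destruct (rect (a+2*t) (a+3*t) b (b+t) z) as (x' & y' & ? & ? & ?); try lra.
           exists x', y'; split; [right|split; [left|]]; lra.
        -- destruct (rect (a+2*t) (a+3*t) (b+2*t) (b+3*t) z) as (x' & y' & ? & ? & ?); try lra.
           exists x', y'; split; [right|split; [right|]]; lra.
  - intros (x & y & Hx & Hy & Hz). exists x, y. repeat split; try lra.
Qed.
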